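(* Let $J\subseteq\Delta^r_n$ be an M-convex set and let $\rho\colon\Delta^r_n\to\mathbb R_{\ge0}$ be a function whose support $\{\alpha:\rho(\alpha)\ne0\}$ equals $J$. Define $f\colon\mathbb Z^n\to\mathbb R\cup\{\infty\}$ by $f(\alpha)=-\log\rho(\alpha)$ for $\alpha\in\Delta^r_n$ (with $-\log 0=\infty$) and $f(\alpha)=\infty$ for $\alpha\notin\Delta^r_n$. Then $\rho$ is a $\mathbb T_0$-representation of $J$ if and only if $f$ is an M-convex function.
   Context: $\Delta^r_n=\{\alpha\in\mathbb N^n:\sum_i\alpha_i=r\}$, $\epsilon_i$ the standard basis vectors, $\le$ componentwise. A nonempty $J\subseteq\Delta^r_n$ is M-convex if for all $\alpha,\beta\in J$ and $i$ with $\alpha_i<\beta_i$ there is $j$ with $\alpha_j>\beta_j$ and $\alpha+\epsilon_i-\epsilon_j,\ \beta-\epsilon_i+\epsilon_j\in J$. $\delta^-_J,\delta^+_J$ denote the componentwise minimum and maximum of the elements of $J$. The tropical hyperfield $\mathbb T_0$ is $\mathbb R_{\ge0}$ with its multiplication, in which $-1=1$, and where a formal sum of elements is null iff either all terms are $0$ or the maximum of the terms is attained by at least two terms. A $\mathbb T_0$-representation of $J$ is a function $\rho\colon\Delta^r_n\to\mathbb R_{\ge0}$ with support $J$ such that for all $2\le s\le r$, all $\alpha\in\Delta^{r-s}_n$ with $\delta^-_J\le\alpha$, and all $i_0,\dots,i_s,j_2,\dots,j_s\in[n]$ with $\alpha+\epsilon_{i_0}+\dots+\epsilon_{i_s}+\epsilon_{j_2}+\dots+\epsilon_{j_s}\le\delta^+_J$,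 the formal sum $\sum_{k=0}^s\rho(\alpha-\epsilon_{i_k}+\epsilon_{i_0}+\dots+\epsilon_{i_s})\cdot\rho(\alpha+\epsilon_{i_k}+\epsilon_{j_2}+\dots+\epsilon_{j_s})$ is null in $\mathbb T_0$. A function $f\colon\mathbb Z^n\to\mathbb R\cup\{\infty\}$ is M-convex (in Murota's sense) if its support $\{\alpha:f(\alpha)\ne\infty\}$ is nonempty and for all $\alpha,\beta$ in the support and every $k$ with $\alpha_k>\beta_k$ there is $l$ with $\alpha_l<\beta_l$ and $f(\alpha)+f(\beta)\ge f(\alpha-\epsilon_k+\epsilon_l)+f(\beta+\epsilon_k-\epsilon_l)$. *)

(* Defs.v *)
From HB Require Import structures.
From mathcomp Require Import all_boot all_order all_algebra.
From mathcomp Require Import all_classical all_reals all_analysis.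
Set Implicit Arguments. Unset Strict Implicit. Unset Printing Implicit Defensive.
Import Order.TTheory GRing.Theory Num.Theory.
Local Open Scope classical_set_scope.
Local Open Scope ring_scope.

Notation vec n := {ffun 'I_n -> int}.

Definition eps (n : nat) (i : 'I_n) : vec n := [ffun j => (i == j)%:R].

Definition vle (n : nat) (a b : vec n) : Prop := forall i, a i <= b i.

Definition in_Delta (n r : nat) (a : vec n) : bool :=
  [forall i, 0 <= a i] && (\sum_i a i == r%:Z).

Definition Mconvex_set (n : nat) (J : set (vec n)) : Prop :=
  J !=set0 /\
  forall a b, J a -> J b -> forall i, a i < b i ->
    exists j, [/\ a j > b j, J (a + eps i - eps j) & J (b - eps i + eps j)].

(* the minimum of a set of integers (default 0 if it has none) *)
Definition int_min (S : set int) : int :=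
  xget 0 [set m | S m /\ forall x, S x -> m <= x].
Definition int_max (S : set int) : int :=
  xget 0 [set m | S m /\ forall x, S x -> x <= m].

Definition delta_minus (n : nat) (J : set (vec n)) : vec n :=
  [ffun i => int_min [set b i | b in J]].
Definition delta_plus (n : nat) (J : set (vec n)) : vec n :=
  [ffun i => int_max [set b i | b in J]].

(* A formal sum of the terms t 0, ..., t (m-1) of T_0 is null *)
Definition T0_null (R : realType) (m : nat) (t : 'I_m -> R) : Prop :=
  (forall k, t k = 0) \/
  exists k1 k2, [/\ k1 != k2, t k1 = t k2 &
                   forall k, t k <= t k1].

Definition T0_representation (R : realType) (n r : nat) (J : set (vec n))
    (rho : vec n -> R) : Prop :=
  (forall a, in_Delta r a -> 0 <= rho a) /\
  (forall a, in_Delta r a -> (rho a != 0 <-> J a)) /\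
  forall (s : nat), (2 <= s <= r)%N ->
  forall (a : vec n), in_Delta (r - s) a -> vle (delta_minus J) a ->
  forall (i : 'I_s.+1 -> 'I_n) (j : 'I_s.-1 -> 'I_n),
    vle (a + \sum_k eps (i k) + \sum_l eps (j l)) (delta_plus J) ->
    T0_null (fun k : 'I_s.+1 =>
      rho (a - eps (i k) + \sum_k' eps (i k')) *
      rho (a + eps (i k) + \sum_l eps (j l))).

Definition f_of (R : realType) (n r : nat) (rho : vec n -> R) (a : vec n)
    : \bar R :=
  if in_Delta r a then (if rho a == 0 then +oo%E else (- ln (rho a))%:E)
  else +oo%E.

Definition Mconvex_fun (R : realType) (n : nat) (f : vec n -> \bar R) : Prop :=
  (exists a, f a != +oo%E) /\
  forall a b, f a != +oo%E -> f b != +oo%E -> forall k, a k > b k ->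
    exists l, a l < b l /\
      (f (a - eps k + eps l)%R + f (b + eps k - eps l)%R <= f a + f b)%E.

(* Main.v *)
Require Import Defs.
From HB Require Import structures.
From mathcomp Require Import all_boot all_order all_algebra.
From mathcomp Require Import all_classical all_reals all_analysis.
From mathcomp Require Import zify ring.
Import Order.TTheory GRing.Theory Num.Theory.
Local Open Scope classical_set_scope.
Local Open Scope ring_scope.



Section Vec.
Context {n : nat}.
Implicit Types u v : vec n.

Definition tot (v : vec n) : int := \sum_i v i.

Lemma totD u v : tot (u + v) = tot u + tot v.
Proof. by rewrite /tot -big_split; apply: eq_bigr => i _; rewrite ffunE. Qed.

Lemma totN v : tot (- v) = - tot v.
Proof. by rewrite /tot -sumrN; apply: eq_bigr => i _; rewrite ffunE. Qed.

Lemma totB u v : tot (u - v) = tot u - tot v.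
Proof. by rewrite totD totN. Qed.

Lemma epsE (p c : 'I_n) : eps p c = (p == c)%:R.
Proof. by rewrite ffunE. Qed.

Lemma tot_eps p : tot (eps p) = 1.
Proof.
rewrite /tot (bigD1 p) //= big1 => [|i ip]; rewrite epsE ?eqxx ?addr0 //.
by rewrite eq_sym (negbTE ip).
Qed.

Lemma tot_sum {m} (F : 'I_m -> vec n) : tot (\sum_x F x) = \sum_x tot (F x).
Proof.
rewrite /tot; under eq_bigr do rewrite sum_ffunE.
exact: exchange_big.
Qed.

Lemma tot_sum_eps {m} (i : 'I_m -> 'I_n) : tot (\sum_x eps (i x)) = m%:Z.
Proof.
rewrite tot_sum; under eq_bigr do rewrite tot_eps.
by rewrite sumr_const card_ord; lia.
Qed.

Lemma cntE {m} (i : 'I_m -> 'I_n) c :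
  (\sum_x eps (i x)) c = \sum_x ((i x == c)%:R : int).
Proof. by rewrite sum_ffunE; apply: eq_bigr => x _; rewrite epsE. Qed.

Lemma cnt_ge0 {m} (i : 'I_m -> 'I_n) c : 0 <= (\sum_x eps (i x)) c.
Proof. by rewrite cntE; apply: sumr_ge0 => x _; rewrite ler0n. Qed.

Lemma cnt_pos {m} (i : 'I_m -> 'I_n) c :
  0 < (\sum_x eps (i x)) c -> exists x, i x = c.
Proof.
rewrite cntE => H; apply/not_existsP => Hn.
move: H; rewrite big1 ?ltxx // => x _.
by case: eqP => // /Hn.
Qed.

Lemma cnt_one {m} (i : 'I_m -> 'I_n) x :
  (forall y, y != x -> i y != i x) -> (\sum_y eps (i y)) (i x) = 1.
Proof.
move=> H; rewrite cntE (bigD1 x) //= eqxx big1 ?addr0 // => y yx.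
by rewrite (negbTE (H y yx)).
Qed.

Lemma cnt_two {m} (i : 'I_m -> 'I_n) x y :
  x != y -> i x = i y -> 2 <= (\sum_z eps (i z)) (i x).
Proof.
move=> xy ixy; rewrite cntE (bigD1 x) //= (bigD1 y) 1?eq_sym //= eqxx ixy eqxx.
rewrite addrA lerDl; apply: sumr_ge0 => z _; exact: ler0n.
Qed.

Lemma in_DeltaP r (a : vec n) : in_Delta r a <-> (forall i, 0 <= a i) /\ tot a = r%:Z.
Proof.
rewrite /in_Delta; split.
  by move=> /andP[/forallP H /eqP E].
by move=> [H E]; apply/andP; split; [apply/forallP|apply/eqP].
Qed.

Lemma multiset (m : nat) (v : vec n) : (forall c, 0 <= v c) -> tot v = m%:Z ->
  exists f : 'I_m -> 'I_n, \sum_t eps (f t) = v.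
Proof.
elim: m v => [|m IH] v v0 vs.
  have f0 : 'I_0 -> 'I_n by case.
  exists f0; rewrite big_ord0; apply/ffunP => c; rewrite ffunE.
  by apply/esym; apply: (psumr_eq0P (P := xpredT) (fun i _ => v0 i) vs).
have [c vc] : exists c, 0 < v c.
  apply/not_existsP => H; move: vs; rewrite /tot big1 // => c _.
  by apply/eqP; rewrite eq_le v0 andbT leNgt; apply/negP => /H.
have [f Hf] : exists f : 'I_m -> 'I_n, \sum_t eps (f t) = v - eps c.
  apply: IH.
  - by move=> d; rewrite !ffunE; case: eqP => [<-|_]; rewrite /= ?mulr1n ?mulr0n ?subr0 ?subr_ge0 -?gtz0_ge1.
  - by rewrite totB tot_eps vs; lia.
exists (fun t => if unlift ord0 t is Some t' then f t' else c).
rewrite big_ord_recl unlift_none.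
under eq_bigr do rewrite liftK.
by rewrite Hf addrC subrK.
Qed.

Lemma coord_le_tot (a : vec n) c : (forall i, 0 <= a i) -> a c <= tot a.
Proof.
move=> H; rewrite /tot (bigD1 c) //= lerDl; apply: sumr_ge0 => i _; exact: H.
Qed.

End Vec.



Lemma argmax_ex {R : realType} {m} (t : 'I_m.+1 -> R) :
  exists x, forall y, t y <= t x.
Proof.
case: (@arg_maxP _ R 'I_m.+1 ord0 xpredT t isT) => x _ Hx.
by exists x => y; apply: Hx.
Qed.

Lemma ln_ineq (R : realType) (x y u v : R) : 0 < x -> 0 < y -> 0 < u -> 0 < v ->
  (((-ln x)%:E + (-ln y)%:E <= (-ln u)%:E + (-ln v)%:E)%E <-> u * v <= x * y).
Proof.
move=> x0 y0 u0 v0.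
rewrite -!EFinD lee_fin -!opprD lerN2 -!lnM ?posrE // ler_ln ?posrE ?mulr_gt0 //.
Qed.

Lemma f_ofE {R : realType} {n r} {rho : vec n -> R} {a} : f_of r rho a != +oo%E ->
  [/\ in_Delta r a, rho a != 0 & f_of r rho a = (- ln (rho a))%:E].
Proof.
by rewrite /f_of; case: ifP => // Hd; case: ifP => // /negbT Hr _; split.
Qed.

Lemma f_of_fin {R : realType} {n r} {rho : vec n -> R} {a} :
  in_Delta r a -> rho a != 0 -> f_of r rho a = (- ln (rho a))%:E.
Proof. by rewrite /f_of => -> /negbTE ->. Qed.



Lemma cnt_ge1 {n m} (i : 'I_m -> 'I_n) x : 1 <= (\sum_y eps (i y)) (i x).
Proof.
rewrite cntE (bigD1 x) //= eqxx lerDl; apply: sumr_ge0 => z _; exact: ler0n.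
Qed.

Lemma fin_sum {R : realType} {u v : \bar R} {w : R} :
  u != -oo%E -> v != -oo%E -> (u + v <= w%:E)%E -> u != +oo%E /\ v != +oo%E.
Proof. by move: u v => [u| |] [v| |]. Qed.

Lemma f_of_ninfty {R : realType} {n r} {rho : vec n -> R} {a} : f_of r rho a != -oo%E.
Proof. by rewrite /f_of; case: ifP => //; case: ifP. Qed.

Lemma test n (a : vec n) {m} (i : 'I_m -> 'I_n) (x : 'I_m) c :
  0 <= a c -> 0 <= (a + \sum_x eps (i x) - eps (i x)) c.
Proof.
move=> H; rewrite !ffunE.
move: H; have := cnt_ge0 i c.
case: eqP => [<-|_] /=; rewrite ?mulr1n ?mulr0n.
  have := cnt_ge1 i x. set S := (\sum_y eps (i y)) (i x). lia.
lia.
Qed.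

Lemma T0_from (R : realType) m (t : 'I_m.+1 -> R) : (forall k, 0 <= t k) ->
  (forall x, 0 < t x -> (forall y, t y <= t x) -> exists x', x' != x /\ t x' = t x) ->
  T0_null t.
Proof.
move=> t0 H; have [allz|nz] := pselect (forall k, t k = 0); first by left.
right; have [x Hx] := argmax_ex t.
have tx : 0 < t x.
  have [y ty] : exists y, t y != 0.
    by apply/not_existsP => Hn; apply: nz => k; apply/eqP/negPn/negP; exact: Hn.
  by apply: (lt_le_trans _ (Hx y)); rewrite lt0r ty t0.
have [x' [x'x E]] := H x tx Hx.
by exists x, x'; split => //; rewrite eq_sym.
Qed.

Lemma dir_back (R : realType) n r (rho : vec n -> R) :
  (forall a, in_Delta r a -> 0 <= rho a) ->
  Mconvex_fun (f_of r rho) ->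
  forall s, (2 <= s <= r)%N -> forall a, in_Delta (r - s) a ->
  forall (i : 'I_s.+1 -> 'I_n) (j : 'I_s.-1 -> 'I_n),
    T0_null (fun k : 'I_s.+1 => rho (a - eps (i k) + \sum_k' eps (i k')) *
      rho (a + eps (i k) + \sum_l eps (j l))).
Proof.
move=> Hnn [_ Hex] s /andP[s2 sr] a /in_DeltaP[a0 ta] i j.
set SI := \sum_k' eps (i k'). set SJ := \sum_l eps (j l).
have -> : (fun k : 'I_s.+1 => rho (a - eps (i k) + SI) * rho (a + eps (i k) + SJ)) =
   (fun k => rho (a + SI - eps (i k)) * rho (a + SJ + eps (i k))).
  by apply/funext => k; rewrite addrAC [a + eps _ + _]addrAC.
have totSI : tot SI = s.+1 := tot_sum_eps i.
have totSJ : tot SJ = s.-1 := tot_sum_eps j.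
have ta' : tot a = r%:Z - s%:Z by rewrite ta; lia.
have SI0 : forall c, 0 <= SI c by exact: cnt_ge0.
have SJ0 : forall c, 0 <= SJ c by exact: cnt_ge0.
have SI1 : forall x, 1 <= SI (i x) by exact: cnt_ge1.
have DA : forall x, in_Delta r (a + SI - eps (i x)).
  move=> x; apply/in_DeltaP; split.
    move=> c; rewrite !ffunE; move: (a0 c) (SI0 c) (SI1 x).
    case: eqP => [<-|_]; rewrite ?mulr1n ?mulr0n.
      by move=> h1 _ h2; rewrite -addrA addr_ge0 // subr_ge0.
    by move=> h1 h2 _; rewrite subr0 addr_ge0.
  by rewrite totB totD tot_eps totSI ta'; lia.
have DB : forall p, in_Delta r (a + SJ + eps p).
  move=> p; apply/in_DeltaP; split.
    move=> c; rewrite !ffunE; move: (a0 c) (SJ0 c) => h1 h2.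
    by rewrite !addr_ge0 // ler0n.
  by rewrite !totD tot_eps totSJ ta'; lia.
apply: T0_from.
  by move=> k; apply: mulr_ge0; apply: Hnn.
move=> x tx Hmax.
have [[x' [x'x E]]|Hn] := pselect (exists x', x' != x /\ i x' = i x).
  by exists x'; split => //=; rewrite E.
have Hu : forall y, y != x -> i y != i x.
  by move=> y yx; apply/eqP => E; apply: Hn; exists y.
have pz : rho (a + SI - eps (i x)) != 0.
  by apply: contraTneq tx => ->; rewrite mul0r ltxx.
have py : rho (a + SJ + eps (i x)) != 0.
  by apply: contraTneq tx => ->; rewrite mulr0 ltxx.
have fy := f_of_fin (DB (i x)) py.
have fz := f_of_fin (DA x) pz.
have SIp : SI (i x) = 1 by exact: cnt_one.
have zy : (a + SI - eps (i x)) (i x) < (a + SJ + eps (i x)) (i x).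
  by rewrite !ffunE eqxx mulr1n SIp addrK -addrA ltrDl ltr_wpDl.
have fy' : f_of r rho (a + SJ + eps (i x)) != +oo%E by rewrite fy.
have fz' : f_of r rho (a + SI - eps (i x)) != +oo%E by rewrite fz.
have [l [yz Hl]] := Hex _ _ fy' fz' (i x) zy.
move: Hl; rewrite addrK subrK fy fz => Hl.
have [fB fA] := fin_sum f_of_ninfty f_of_ninfty (eq_ind _ (fun u => (_ <= u)%E) Hl _ (esym (EFinD _ _))).
have [dB nB eB] := f_ofE fB.
have [dA nA eA] := f_ofE fA.
have pos : forall v, in_Delta r v -> rho v != 0 -> 0 < rho v.
  by move=> v dv nv; rewrite lt0r nv Hnn.
move: Hl; rewrite eB eA ln_ineq ?pos // => Hl.
have lp : l != i x.
  by apply/eqP => E; move: yz zy; rewrite E => h1 h2; move: (lt_trans h1 h2); rewrite ltxx.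
have [x' ix'] : exists x', i x' = l.
  apply: cnt_pos; move: yz; rewrite !ffunE eq_sym (negbTE lp) mulr0n addr0 subr0 ltrD2l => h.
  exact: le_lt_trans (SJ0 l) h.
exists x'; split.
  by apply/eqP => E; move: lp; rewrite -ix' E eqxx.
apply/le_anti; rewrite Hmax /= ix' mulrC.
by rewrite [X in _ <= X]mulrC.
Qed.



Lemma int_min_le (S : set int) x : S x -> (forall y, S y -> 0 <= y) -> int_min S <= x.
Proof.
move=> Sx H.
have [m [Sm Hm]] : exists m, S m /\ forall y, S y -> m <= y.
  have ex : exists k : nat, `[< S k%:Z >].
    by exists `|x|%N; apply/asboolP; rewrite gez0_abs ?H.
  case: (ex_minnP ex) => k /asboolP Sk Hk; exists k%:Z; split => // y Sy.
  have y0 := H y Sy; rewrite -(gez0_abs y0) lez_nat; apply: Hk.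
  by apply/asboolP; rewrite gez0_abs.
have [_ P] := xgetPex 0 (ex_intro (fun m => S m /\ forall x, S x -> m <= x) m (conj Sm Hm)).
exact: P.
Qed.

Lemma int_max_ge (S : set int) (B : nat) x : S x ->
  (forall y, S y -> 0 <= y <= B%:Z) -> x <= int_max S.
Proof.
move=> Sx H.
have [m [Sm Hm]] : exists m, S m /\ forall y, S y -> y <= m.
  have ex : exists k : nat, `[< S k%:Z >].
    by exists `|x|%N; apply/asboolP; rewrite gez0_abs ?(andP (H x Sx)).1.
  have bd : forall k : nat, `[< S k%:Z >] -> (k <= B)%N.
    by move=> k /asboolP Sk; have /andP[_] := H _ Sk; rewrite lez_nat.
  case: (ex_maxnP ex bd) => k /asboolP Sk Hk; exists k%:Z; split => // y Sy.
  have /andP[y0 _] := H y Sy; rewrite -(gez0_abs y0) lez_nat; apply: Hk.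
  by apply/asboolP; rewrite gez0_abs.
have [_ P] := xgetPex 0 (ex_intro (fun m => S m /\ forall x, S x -> x <= m) m (conj Sm Hm)).
exact: P.
Qed.

Lemma dminus_le n r (J : set (vec n)) a c : (forall a, J a -> in_Delta r a) ->
  J a -> delta_minus J c <= a c.
Proof.
move=> HJ Ja; rewrite ffunE; apply: int_min_le; first by exists a.
by move=> y [b Jb <-]; have /in_DeltaP[] := HJ b Jb.
Qed.

Lemma dplus_ge n r (J : set (vec n)) a c : (forall a, J a -> in_Delta r a) ->
  J a -> a c <= delta_plus J c.
Proof.
move=> HJ Ja; rewrite ffunE; apply: (@int_max_ge _ r); first by exists a.
move=> y [b Jb <-]; have /in_DeltaP[b0 tb] := HJ b Jb.
by rewrite b0 -tb coord_le_tot.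
Qed.

Lemma dir_fwd (R : realType) n r (J : set (vec n)) (rho : vec n -> R) :
  (forall a, J a -> in_Delta r a) -> J !=set0 ->
  (forall a, in_Delta r a -> 0 <= rho a) ->
  (forall a, in_Delta r a -> (rho a != 0 <-> J a)) ->
  T0_representation r J rho -> Mconvex_fun (f_of r rho).
Proof.
move=> HJ [a0 Ja0] Hnn Hsupp [_ [_ HT]].
have pos : forall v, in_Delta r v -> rho v != 0 -> 0 < rho v.
  by move=> v dv nv; rewrite lt0r nv Hnn.
split.
  exists a0; have d := HJ _ Ja0; rewrite f_of_fin //; exact/(Hsupp _ d).
move=> a b fa fb k bk.
have [da na ea] := f_ofE fa; have [db nb eb] := f_ofE fb.
have Ja : J a by apply/(Hsupp _ da).
have Jb : J b by apply/(Hsupp _ db).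
have /in_DeltaP[a0' ta] := da; have /in_DeltaP[b0' tb] := db.
have [al alE] : exists al : vec n, forall c, al c = Order.min (a c) (b c).
  by exists [ffun c => Order.min (a c) (b c)] => c; rewrite ffunE.
have alk : al k = b k by rewrite alE min_r // ltW.
have ala : forall c, al c <= a c by move=> c; rewrite alE ge_min lexx.
have alb : forall c, al c <= b c by move=> c; rewrite alE ge_min lexx orbT.
have al0 : forall c, 0 <= al c by move=> c; rewrite alE le_min a0' b0'.
have tal0 : 0 <= tot al by apply: sumr_ge0 => c _; exact: al0.
have D0 : 0 <= tot b - tot al.
  by rewrite -totB; apply: sumr_ge0 => c _; rewrite !ffunE subr_ge0.
set s := `|tot b - tot al|%N.
have Ds : tot b - tot al = s%:Z by rewrite gez0_abs.
have s1 : (1 <= s)%N.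
  have : a k - al k <= tot (a - al).
    have h : forall c, 0 <= (a - al) c by move=> c; rewrite !ffunE subr_ge0.
    by have := coord_le_tot _ k h; rewrite !ffunE.
  rewrite totB ta -tb alk; move: bk Ds; lia.
have ala0 : forall c, 0 <= (a - al) c by move=> c; rewrite !ffunE subr_ge0.
have alb0 : forall c, 0 <= (b - al) c by move=> c; rewrite !ffunE subr_ge0.
case: (ltnP 1 s) => s2; last first.
  have s_1 : s = 1%N by apply/eqP; rewrite eqn_leq s1 s2.
  have [f1 Hf1] : exists f : 'I_1 -> 'I_n, \sum_t eps (f t) = b - al.
    by apply: multiset alb0 _; rewrite totB Ds s_1.
  have [g1 Hg1] : exists f : 'I_1 -> 'I_n, \sum_t eps (f t) = a - al.
    by apply: multiset ala0 _; rewrite totB ta -tb Ds s_1.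
  rewrite big_ord1 in Hf1; rewrite big_ord1 in Hg1.
  set l := f1 ord0 in Hf1.
  have gk : g1 ord0 = k.
    have := congr1 (fun v : vec n => v k) Hg1; rewrite !ffunE alk.
    by case: (g1 ord0 =P k) => // _ /= h; move: bk; rewrite -subr_gt0 -h ltxx.
  rewrite gk in Hg1.
  have hb : b = al + eps l by rewrite Hf1 addrC subrK.
  have ha : a = al + eps k by rewrite Hg1 addrC subrK.
  have lk : l != k.
    apply/eqP => E; have := congr1 (fun v : vec n => v k) Hf1.
    by rewrite !ffunE alk E eqxx subrr.
  exists l; split.
    by rewrite ha hb !ffunE eqxx eq_sym (negbTE lk) ltrD2l ltr01.
  have E1 : a - eps k + eps l = b by rewrite ha addrK hb.
  have E2 : b + eps k - eps l = a by rewrite hb addrAC addrK ha.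
  by rewrite E1 E2 addeC.
have U0 : forall c, 0 <= (b + eps k - al) c.
  move=> c; rewrite !ffunE; move: (alb c); case: eqP => _; rewrite /= ?mulr1n ?mulr0n; lia.
have V0 : forall c, 0 <= (a - eps k - al) c.
  move=> c; rewrite !ffunE; move: (ala c); case: eqP => [<-|_]; rewrite /= ?mulr1n ?mulr0n.
    by rewrite alk; move: bk; lia.
  lia.
have [i Hi] : exists i : 'I_s.+1 -> 'I_n, \sum_t eps (i t) = b + eps k - al.
  by apply: multiset U0 _; rewrite totB totD tot_eps; move: Ds; lia.
have [j Hj] : exists j : 'I_s.-1 -> 'I_n, \sum_t eps (j t) = a - eps k - al.
  by apply: multiset V0 _; rewrite !totB tot_eps ta -tb; move: Ds s2; lia.
have sr : (s <= r)%N by move: Ds tal0 tb; lia.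
have dal : in_Delta (r - s) al.
  by apply/in_DeltaP; split => //; move: Ds tb sr; lia.
have dmin : vle (delta_minus J) al.
  by move=> c; rewrite alE le_min (@dminus_le n r J a c HJ Ja) (@dminus_le n r J b c HJ Jb).
have dplus : vle (al + \sum_t eps (i t) + \sum_t eps (j t)) (delta_plus J).
  move=> c; rewrite Hi Hj.
  have E : (al + (b + eps k - al) + (a - eps k - al)) c = a c + b c - al c.
    by rewrite !ffunE; ring.
  rewrite E alE; have h1 := @dplus_ge n r J a c HJ Ja; have h2 := @dplus_ge n r J b c HJ Jb.
  case: (leP (a c) (b c)) => h.
    by rewrite addrAC subrr add0r.
  by rewrite addrK.
have HT' := HT s (introT andP (conj s2 sr)) al dal dmin i j dplus.
rewrite Hi Hj in HT'.
have tE : (fun x : 'I_s.+1 => rho (al - eps (i x) + (b + eps k - al)) *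
    rho (al + eps (i x) + (a - eps k - al))) =
  (fun x => rho (b + eps k - eps (i x)) * rho (a - eps k + eps (i x))).
  by apply/funext => x; rewrite [al - _ + _]addrC addrA subrK [al + _ + _]addrC addrA subrK.
rewrite tE in HT'.
have Uk : (\sum_t eps (i t)) k = 1.
  by rewrite Hi !ffunE eqxx alk mulr1n addrAC subrr add0r.
have [x0 ix0] : exists x0, i x0 = k by apply: cnt_pos; rewrite Uk ltr01.
have pab : 0 < rho b * rho a by rewrite mulr_gt0 ?pos.
case: HT' => [allz|[k1 [k2 [neq eqt maxt]]]].
  by move: (allz x0); rewrite /= ix0 addrK subrK => h; move: pab; rewrite h ltxx.
have [ks [iks tks]] : exists ks, i ks != k /\ rho (b + eps k - eps (i ks)) * rho (a - eps k + eps (i ks)) =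
    rho (b + eps k - eps (i k1)) * rho (a - eps k + eps (i k1)).
  case: (eqVneq (i k1) k) => h1; last by exists k1.
  case: (eqVneq (i k2) k) => h2; last by exists k2; split => //; rewrite eqt.
  have := cnt_two i k1 k2 neq (etrans h1 (esym h2)); rewrite h1 Uk.
  by [].
have tx0 := maxt x0; rewrite /= ix0 addrK subrK in tx0.
move: tks; set l := i ks => tks.
have Ul : 1 <= (b + eps k - al) l by rewrite -Hi; exact: cnt_ge1.
have lk : k != l by rewrite eq_sym.
have alt : a l < b l.
  move: Ul; rewrite !ffunE (negbTE lk) mulr0n addr0 alE.
  case: (leP (a l) (b l)) => h; last by rewrite subrr.
  by rewrite -subr_gt0 => h'; apply: lt_le_trans h'.
have Hp : rho b * rho a <= rho (b + eps k - eps l) * rho (a - eps k + eps l).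
  by rewrite tks.
have ppos : 0 < rho (b + eps k - eps l) * rho (a - eps k + eps l) := lt_le_trans pab Hp.
have nB : rho (b + eps k - eps l) != 0.
  by apply: contraTneq ppos => ->; rewrite mul0r ltxx.
have nA : rho (a - eps k + eps l) != 0.
  by apply: contraTneq ppos => ->; rewrite mulr0 ltxx.
have dA : in_Delta r (a - eps k + eps l).
  apply/in_DeltaP; split; last by rewrite totD totB !tot_eps ta subrK.
  move=> c; rewrite !ffunE; apply: addr_ge0; last exact: ler0n.
  case: (k =P c) => [<-|_] /=; last by rewrite mulr0n subr0 a0'.
  by rewrite mulr1n subr_ge0 -gtz0_ge1; exact: le_lt_trans (b0' k) bk.
have dB : in_Delta r (b + eps k - eps l).
  apply/in_DeltaP; split; last by rewrite totB totD !tot_eps tb addrK.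
  move=> c; rewrite !ffunE addrAC; apply: addr_ge0; last exact: ler0n.
  case: (l =P c) => [<-|_] /=; last by rewrite mulr0n subr0 b0'.
  by rewrite mulr1n subr_ge0 -gtz0_ge1; exact: le_lt_trans (a0' l) alt.
exists l; split => //.
rewrite (f_of_fin dA nA) (f_of_fin dB nB) ea eb ln_ineq ?pos //.
by rewrite mulrC [X in _ <= X]mulrC.
Qed.

Theorem propositionB (R : realType) (n r : nat) (J : set (vec n))
    (rho : vec n -> R) :
  (forall a, J a -> in_Delta r a) ->
  Mconvex_set J ->
  (forall a, in_Delta r a -> 0 <= rho a) ->
  (forall a, in_Delta r a -> (rho a != 0 <-> J a)) ->
  (T0_representation r J rho <-> Mconvex_fun (f_of r rho)).
Proof.
move=> HJ [Jne _] Hnn Hsupp; split.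
  by move=> HT; exact: (@dir_fwd _ _ _ _ _ HJ Jne Hnn Hsupp HT).
move=> HM; split => //; split => // s hs a da _ i j _.
exact: (@dir_back _ _ _ _ Hnn HM s hs a da i j).
Qed.
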